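(* Let $\Bbbk$ be an algebraically closed field of characteristic $2$ and let $\mathfrak{u}(\mathfrak{m})$ be the algebra generated by $a,b,c$ with relations $ab+ba=c$, $ac+ca=a$, $bc+cb=b$, $a^4=b^4=0$, $c^2+c=0$. For every finite-dimensional left $\mathfrak{u}(\mathfrak{m})$-module $V$, the Jordan normal form of the operator by which $a$ acts on $V$ has no Jordan block of size $2$. *)

(* Defs.v *)
From mathcomp Require Import all_boot all_order all_algebra.
Set Implicit Arguments. Unset Strict Implicit. Unset Printing Implicit Defensive.
Import GRing.Theory.
Local Open Scope ring_scope.

Definition jdef (K : fieldType) : K * nat := (0, 0%N).

Definition jordan_block (K : fieldType) (lam : K) (m : nat) : 'M[K]_m :=
  \matrix_(i < m, j < m) (if j == i then lam else if (nat_of_ord j == i.+1)%N then 1 else 0).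

Definition jordan_mx (K : fieldType) (s : seq (K * nat)) :
  'M[K]_(\sum_(i < size s) (nth (jdef K) s i).2) :=
  mxdiag (fun i : 'I_(size s) =>
            jordan_block (nth (jdef K) s i).1 (nth (jdef K) s i).2).

Definition is_jordan_form (K : fieldType) (n : nat) (A : 'M[K]_n)
    (s : seq (K * nat)) : Prop :=
  all (fun x => (0 < x.2)%N) s /\
  exists (e : (\sum_(i < size s) (nth (jdef K) s i).2)%N = n),
  exists2 P : 'M[K]_n, P \in unitmx &
    A = invmx P *m castmx (e, e) (jordan_mx s) *m P.

Definition um_module (K : fieldType) (n : nat) (A B C : 'M[K]_n) : Prop :=
  [/\ A *m B + B *m A = C,
      A *m C + C *m A = A,
      B *m C + C *m B = B &
      [/\ A *m A *m A *m A = 0,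
      B *m B *m B *m B = 0 &
      C *m C + C = 0]].

(* Main.v *)
Require Import Defs.
From mathcomp Require Import all_boot all_order all_algebra.
Local Open Scope ring_scope.
Import GRing.Theory.
Lemma blk_false (K : fieldType) (lam : K) (m : nat) : m = 2%N ->
  let M := jordan_block lam m in
  (forall v : 'cV_m, M *m M *m M *m M *m v = 0) ->
  (forall v : 'cV_m, M *m M *m v = 0 -> exists w, M *m v = M *m M *m w) -> False.
Proof.
move=> -> M N Q.
have Me0 : M *m (delta_mx 0 0 : 'cV_2) = lam *: (delta_mx 0 0 : 'cV_2).
  apply/matrixP => i j; rewrite !mxE !big_ord_recl big_ord0 !mxE.
  by case: i => [[|[|i]] Hi] //=; case: j => [[|j] Hj] //=; rewrite ?mulr0 ?mulr1 ?addr0 ?mul0r.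
have Hl : lam = 0.
  have := N ((delta_mx 0 0 : 'cV_2)).
  have Me0' : forall a, M *m (a *: (delta_mx 0 0 : 'cV_2)) = (a*lam) *: delta_mx 0 0 by move=> a; rewrite -scalemxAr Me0 scalerA.
  rewrite -!mulmxA Me0 !Me0' =>/matrixP /(_ 0 0).
  by rewrite !mxE /= mulr1 => /eqP; rewrite !mulf_eq0 !orbb => /eqP.
have M2 : M *m M = 0.
  apply/matrixP => i j; rewrite !mxE !big_ord_recl big_ord0 !mxE Hl.
  by case: i => [[|[|i]] Hi] //=; case: j => [[|[|j]] Hj] //=; rewrite ?mulr0 ?mulr1 ?addr0 ?mul0r.
have [|w] := Q (delta_mx 1 0 : 'cV_2); first by rewrite M2 mul0mx.
rewrite M2 mul0mx => /matrixP /(_ 0 0).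
rewrite !mxE !big_ord_recl big_ord0 !mxE Hl /=.
by rewrite ?mulr0 ?mulr1 ?addr0 ?mul0r ?add0r => /eqP; rewrite oner_eq0.
Qed.
Lemma diag_blocks (K : fieldType) k (p_ : 'I_k -> nat) (D_ : forall i, 'M[K]_(p_ i)) :
 let J := mxdiag D_ in
 (forall u : 'cV_(\sum_i p_ i), J*m J*m J*m J*m u = 0) ->
 (forall u : 'cV_(\sum_i p_ i), J*m J*m u = 0 -> exists w, J *m u = J*m J*m w) ->
 forall i, (forall v : 'cV_(p_ i), D_ i *m D_ i *m D_ i *m D_ i *m v = 0) /\
   (forall v : 'cV_(p_ i), D_ i *m D_ i *m v = 0 -> exists w, D_ i *m v = D_ i *m D_ i *m w).
Proof.
move=> J N Q i.
pose U (v : 'cV_(p_ i)) := \mxcol_j (if j == i then conform_mx 0 v else 0 : 'M[K]_(p_ j, 1)).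
split.
  move=> v; have := N (U v).
  rewrite -!mulmxA /J !mul_mxdiag_mxcol => /(congr1 (fun X => submxcol X i)).
  by rewrite mxcolK submxcol0 eqxx conform_mx_id !mulmxA.
move=> v Hv.
have [|w Hw] := Q (U v).
  rewrite -!mulmxA /J !mul_mxdiag_mxcol -(@mxcol0 _ _ p_).
  apply/eq_mxcol => j; case: eqP => [ji|_]; last by rewrite !mulmx0.
  by subst j; rewrite conform_mx_id mulmxA.
exists (submxcol w i).
move: Hw; rewrite -(submxcolK w) -!mulmxA /J !mul_mxdiag_mxcol.
move=> /(congr1 (fun X => submxcol X i)).
by rewrite !mxcolK eqxx conform_mx_id !mulmxA.
Qed.
Lemma two0 (K : fieldType) (hchar : (2 \in [pchar K])%N) m k (M : 'M[K]_(m,k)) : M + M = 0.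
Proof.
by apply/matrixP=> i j; rewrite !mxE -mulr2n -mulr_natr (pcharf0 hchar) mulr0.
Qed.

Theorem lemma3p5 (K : closedFieldType) (hchar : (2 \in [pchar K])%N)
  (n : nat) (A B C : 'M[K]_n) :
  um_module A B C ->
  forall s : seq (K * nat), is_jordan_form A s ->
  forall x, x \in s -> x.2 <> 2%N.
Proof.
move=> [hAB hAC _ [hA4 _ _]] s [_ [e [P Pu HA]]] x xs x2.
have hA : A = A *m A *m B + B *m A *m A.
  rewrite -{1}hAC -hAB mulmxDr mulmxDl !mulmxA.
  by rewrite addrA -(addrA (A*m A*m B) (A*m B*m A) (A *m B *m A)) (two0 _ hchar) addr0.
subst n; rewrite castmx_id in HA.
set J := jordan_mx s in HA.
have c1 : forall m (X : 'M[K]_(m, _)), X *m invmx P *m P = X.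
  by move=> m X; rewrite -mulmxA mulVmx // mulmx1.
have c2 : forall m (X : 'M[K]_(m, _)), X *m P *m invmx P = X.
  by move=> m X; rewrite -mulmxA mulmxV // mulmx1.
have HJ : J = P *m A *m invmx P.
  by rewrite HA !mulmxA mulmxV // mul1mx c2.
have NJ : forall u : 'cV_(\sum_(i < size s) (nth (jdef K) s i).2), J *m J *m J *m J *m u = 0.
  move=> u; rewrite HJ !mulmxA !c1 -(mulmxA P A) -(mulmxA P) -(mulmxA P) hA4.
  by rewrite mulmx0 !mul0mx.
have QJ : forall u : 'cV_(\sum_(i < size s) (nth (jdef K) s i).2),
    J *m J *m u = 0 -> exists w, J *m u = J *m J *m w.
  move=> u Hu.
  have Hu' : A *m (A *m (invmx P *m u)) = 0.
    have := congr1 (mulmx (invmx P)) Hu.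
    rewrite HJ !mulmxA c1 mulmx0 mulVmx // mul1mx.
    by rewrite -!mulmxA.
  exists (P *m (B *m (invmx P *m u))).
  rewrite HJ !mulmxA !c1 -!mulmxA; congr (P *m _).
  by rewrite {1}hA mulmxDl -!mulmxA Hu' !mulmx0 addr0.
have [i Hi] : exists i : 'I_(size s), nth (jdef K) s i = x.
  have ilt : (index x s < size s)%N by rewrite index_mem.
  by exists (Ordinal ilt); rewrite /= nth_index.
rewrite /J /jordan_mx in NJ QJ.
have [N' Q'] := diag_blocks _ _ _ _ NJ QJ i.
have hm : (nth (jdef K) s i).2 = 2%N by rewrite Hi.
exact: (blk_false _ _ _ hm N' Q').
Qed.
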